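(* In the setting of the augmented matrices $\widehat{\mathbf A}^k=\mathbf S^k\mathbf C^k$ (column-stochastic, with all entries of the rows indexed by $\mathcal V$ of $\widehat{\mathbf A}^{k+K_1-1:k}$ bounded below by $\eta=\bar m^{K_1}$), there exists a sequence of stochastic vectors $\{\boldsymbol\xi^k\}_{k\in\mathbb N_0}\subset\mathbb R^S$ such that for all $k\ge t\ge0$ and all $i,j\in\{1,\dots,S\}$, $$|\widehat A^{k:t}_{ij}-\xi_i^k|\le C\rho^{k-t},\qquad C=2\frac{1+\bar m^{-K_1}}{1-\bar m^{K_1}},\quad\rho=(1-\bar m^{K_1})^{1/K_1}\in(0,1).$$ Furthermore $\xi_i^k\ge\eta$ for all $i\in\mathcal V$ and $k\in\mathbb N_0$.
   Context: $\mathcal G=(\mathcal V,\mathcal E)$, $\mathcal V=\{1,\dots,I\}$, strongly connected digraph without self-loops; $\mathcal N_i^{\rm in}=\{j:(j,i)\in\mathcal E\}$, $\mathcal N_i^{\rm out}=\{j:(i,j)\in\mathcal E\}$. $A=(a_{ij})$ column-stochastic with $a_{ii}\ge\bar m$, $a_{ij}\ge\bar m$ for $(j,i)\in\mathcal E$, $a_{ij}=0$ otherwise, $\bar m\in(0,1)$. Asynchrony model: $(i^k,\mathbf d^k)$, $i^k\in\mathcal V$, $\mathbf d^k=(d_j^k)_{j\in\mathcal N^{\rm in}_{i^k}}$, every agent appears among $i^k,\dots,i^{k+T-1}$ for all $k$, $0\le d_j^k\le D$; $K_1=(2I-1)T+ID$. Counters: $\tau_{ij}^{-1}=-D$; $\tau_{i^kj}^k=\max(\tau_{i^kj}^{k-1},k-d_j^k)$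 for $j\in\mathcal N^{\rm in}_{i^k}$, unchanged otherwise. $\widehat{\mathcal V}=\mathcal V\cup\{(j,i)^d:(j,i)\in\mathcal E,\ 0\le d\le D\}$, $S=|\widehat{\mathcal V}|$. $R^k=\{(j,i^k)^d:j\in\mathcal N^{\rm in}_{i^k},\ k-\tau^k_{i^kj}\le d\le D\}$. $\mathbf C^k$: $C^k_{i^k m}=1$ for $m\in R^k$, $C^k_{mm}=1$ for $m\notin R^k$, else $0$. $\mathbf S^k$: $S^k_{(i^k,j)^0,i^k}=a_{ji^k}$ ($j\in\mathcal N^{\rm out}_{i^k}$), $S^k_{i^ki^k}=a_{i^ki^k}$, $S^k_{hh}=1$ for $h\in\mathcal V\setminus\{i^k\}$, $S^k_{(i,j)^{d+1},(i,j)^d}=1$ ($0\le d\le D-1$), $S^k_{(i,j)^D,(i,j)^D}=1$, else $0$. $\widehat{\mathbf A}^{k:t}=\widehat{\mathbf A}^k\cdots\widehat{\mathbf A}^t$. *)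

(* Defs.v *)
From Stdlib Require Import Reals Lra Lia ZArith Arith List Bool.
From Stdlib Require Import Relations.Relation_Operators.
Import ListNotations.
Open Scope R_scope.

(* Agents are 0,...,I-1 (the paper's 1,...,I shifted by one).
   The digraph is given by a boolean edge predicate E : (j,i) in E iff E j i = true. *)

Definition lsum {X : Type} (l : list X) (f : X -> R) : R :=
  fold_right Rplus 0 (map f l).

(* Augmented node set: agents  Ag i  and buffer nodes  Buf j i d  = (j,i)^d. *)
Inductive node : Type :=
| Ag : nat -> node
| Buf : nat -> nat -> nat -> node.

Definition node_eq_dec (p q : node) : {p = q} + {p <> q}.
Proof. decide equality; apply Nat.eq_dec. Defined.

(* The (duplicate-free) enumeration of hat V = V ∪ {(j,i)^d : (j,i) ∈ E, 0 <= d <= D};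
   S = length (nodes I E D). *)
Definition nodes (I : nat) (E : nat -> nat -> bool) (D : nat) : list node :=
  map Ag (seq 0 I) ++
  flat_map (fun j => flat_map (fun i =>
     if E j i then map (Buf j i) (seq 0 (S D)) else []) (seq 0 I)) (seq 0 I).

(* Counters:  tauS n i j = tau_{ij}^{n-1};  tauS 0 = tau^{-1} = -D. *)
Fixpoint tauS (E : nat -> nat -> bool) (D : nat) (ik : nat -> nat)
    (dk : nat -> nat -> nat) (n i j : nat) : Z :=
  match n with
  | O => (- Z.of_nat D)%Z
  | S k =>
      let prev := tauS E D ik dk k i j in
      if Nat.eqb i (ik k) && E j i
      then Z.max prev (Z.of_nat k - Z.of_nat (dk k j))%Z
      else prev
  end.

Definition tau E D ik dk (k i j : nat) : Z := tauS E D ik dk (S k) i j.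

Definition inRk E D ik dk (k : nat) (p : node) : bool :=
  match p with
  | Ag _ => false
  | Buf j i d =>
      Nat.eqb i (ik k) && E j i &&
      Z.leb (Z.of_nat k - tau E D ik dk k i j)%Z (Z.of_nat d) &&
      Nat.leb d D
  end.

Definition node_eqb (p q : node) : bool :=
  if node_eq_dec p q then true else false.

Definition Cmat E D ik dk (k : nat) (p q : node) : R :=
  if inRk E D ik dk k q
  then (if node_eqb p (Ag (ik k)) then 1 else 0)
  else (if node_eqb p q then 1 else 0).

Definition Smat (A : nat -> nat -> R) E D (ik : nat -> nat) (k : nat) (p q : node) : R :=
  match p, q with
  | Buf i j 0, Ag h =>
      if Nat.eqb i (ik k) && Nat.eqb h (ik k) && E i j then A j (ik k) else 0
  | Ag h', Ag h =>
      if Nat.eqb h' h then (if Nat.eqb h (ik k) then A h h else 1) else 0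
  | Buf i j (S d), Buf i' j' d' =>
      if Nat.eqb i i' && Nat.eqb j j' && Nat.eqb d d' && Nat.ltb d D then 1
      else if Nat.eqb i i' && Nat.eqb j j' && Nat.eqb (S d) d' && Nat.eqb d' D then 1
      else 0
  | Buf i j 0, Buf i' j' d' =>
      if Nat.eqb i i' && Nat.eqb j j' && Nat.eqb d' 0 && Nat.eqb D 0 then 1 else 0
  | _, _ => 0
  end.

Definition mmul (ns : list node) (M N : node -> node -> R) (p q : node) : R :=
  lsum ns (fun r => M p r * N r q).

Definition Ahat A I E D ik dk (k : nat) : node -> node -> R :=
  mmul (nodes I E D) (Smat A E D ik k) (Cmat E D ik dk k).

(* AprodN t n = hat A^{t+n : t} = hat A^{t+n} ... hat A^t *)
Fixpoint AprodN A I E D ik dk (t n : nat) : node -> node -> R :=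
  match n with
  | O => Ahat A I E D ik dk t
  | S n' => mmul (nodes I E D) (Ahat A I E D ik dk (t + S n')) (AprodN A I E D ik dk t n')
  end.

Definition Aprod A I E D ik dk (k t : nat) : node -> node -> R :=
  AprodN A I E D ik dk t (k - t).

Definition K1 (I T D : nat) : nat := (2 * I - 1) * T + I * D.

(* Main.v *)
Require Import Defs.
From Stdlib Require Import Reals ZArith Arith List Lia Lra FinFun Classical Bool.
From Stdlib Require Import Relations.Relation_Operators.
Import ListNotations.
Open Scope R_scope.

Lemma lsum_nil {X} (f : X -> R) : lsum [] f = 0. Proof. reflexivity. Qed.
Lemma lsum_cons {X} (x : X) l f : lsum (x :: l) f = f x + lsum l f. Proof. reflexivity. Qed.
Lemma lsum_app {X} (l1 l2 : list X) f : lsum (l1 ++ l2) f = lsum l1 f + lsum l2 f.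
Proof. induction l1; simpl; rewrite ?lsum_nil, ?lsum_cons; [lra|]. unfold lsum in *; simpl. rewrite IHl1. lra. Qed.
Lemma lsum_ext_in {X} (l : list X) f g : (forall x, In x l -> f x = g x) -> lsum l f = lsum l g.
Proof. induction l; intros H; [reflexivity|]. rewrite !lsum_cons, H, IHl; auto. intros; apply H; simpl; auto. simpl; auto. Qed.
Lemma lsum_plus {X} (l : list X) f g : lsum l (fun x => f x + g x) = lsum l f + lsum l g.
Proof. induction l; [rewrite !lsum_nil; lra|]. rewrite !lsum_cons, IHl. lra. Qed.
Lemma lsum_minus {X} (l : list X) f g : lsum l (fun x => f x - g x) = lsum l f - lsum l g.
Proof. induction l; [rewrite !lsum_nil; lra|]. rewrite !lsum_cons, IHl. lra. Qed.
Lemma lsum_scal {X} (l : list X) c f : lsum l (fun x => c * f x) = c * lsum l f.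
Proof. induction l; [rewrite !lsum_nil; lra|]. rewrite !lsum_cons, IHl. lra. Qed.
Lemma lsum_scalr {X} (l : list X) c f : lsum l (fun x => f x * c) = lsum l f * c.
Proof. induction l; [rewrite !lsum_nil; lra|]. rewrite !lsum_cons, IHl. lra. Qed.
Lemma lsum_zero {X} (l : list X) f : (forall x, In x l -> f x = 0) -> lsum l f = 0.
Proof. intros H. rewrite (lsum_ext_in l f (fun _ => 0)) by auto. induction l; [reflexivity|]. rewrite lsum_cons, IHl; [lra|]. intros; apply H; simpl; auto. Qed.
Lemma lsum_le {X} (l : list X) f g : (forall x, In x l -> f x <= g x) -> lsum l f <= lsum l g.
Proof. induction l; intros H; [rewrite !lsum_nil; lra|]. rewrite !lsum_cons.
  assert (f a <= g a) by (apply H; simpl; auto). assert (lsum l f <= lsum l g) by (apply IHl; intros; apply H; simpl; auto). lra. Qed.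
Lemma lsum_nonneg {X} (l : list X) f : (forall x, In x l -> 0 <= f x) -> 0 <= lsum l f.
Proof. intros H. replace 0 with (lsum l (fun _ => 0)). apply lsum_le; auto. apply lsum_zero; auto. Qed.
Lemma lsum_term {X} (l : list X) f x : In x l -> (forall y, In y l -> 0 <= f y) -> f x <= lsum l f.
Proof. induction l; intros Hx H; [destruct Hx|]. rewrite lsum_cons. destruct Hx as [<-|Hx].
  - assert (0 <= lsum l f) by (apply lsum_nonneg; intros; apply H; simpl; auto). lra.
  - assert (0 <= f a) by (apply H; simpl; auto). assert (f x <= lsum l f) by (apply IHl; auto; intros; apply H; simpl; auto). lra. Qed.
Lemma lsum_swap {X Y} (l1 : list X) (l2 : list Y) f :
  lsum l1 (fun a => lsum l2 (fun b => f a b)) = lsum l2 (fun b => lsum l1 (fun a => f a b)).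
Proof. induction l1. - rewrite lsum_nil. symmetry; apply lsum_zero; intros; reflexivity.
  - rewrite lsum_cons, IHl1. rewrite <- lsum_plus. apply lsum_ext_in; intros; rewrite lsum_cons; reflexivity. Qed.
Lemma lsum_abs {X} (l : list X) f : Rabs (lsum l f) <= lsum l (fun x => Rabs (f x)).
Proof. induction l; [rewrite !lsum_nil, Rabs_R0; lra|]. rewrite !lsum_cons. eapply Rle_trans; [apply Rabs_triang|]. lra. Qed.
Lemma lsum_map {X Y} (g : X -> Y) l f : lsum (map g l) f = lsum l (fun x => f (g x)).
Proof. induction l; [reflexivity|]. simpl. rewrite !lsum_cons, IHl. reflexivity. Qed.
Lemma lsum_flat_map {X Y} (g : X -> list Y) l f : lsum (flat_map g l) f = lsum l (fun x => lsum (g x) f).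
Proof. induction l; [reflexivity|]. simpl. rewrite lsum_app, lsum_cons, IHl. reflexivity. Qed.
Lemma lsum_ind_gen {X} (eqb : X -> X -> bool) (Heq : forall a b, eqb a b = true <-> a = b)
  (l : list X) x g : NoDup l -> In x l -> lsum l (fun r => if eqb r x then g r else 0) = g x.
Proof. induction l; intros Hnd Hx; [destruct Hx|]. inversion Hnd; subst. rewrite lsum_cons. destruct Hx as [<-|Hx].
  - assert (eqb a a = true) by (apply Heq; auto). rewrite H. rewrite lsum_zero; [lra|].
    intros y Hy. destruct (eqb y a) eqn:E; auto. apply Heq in E; subst; contradiction.
  - destruct (eqb a x) eqn:E. apply Heq in E; subst; contradiction. rewrite IHl; auto. lra. Qed.
Lemma node_eqb_iff a b : node_eqb a b = true <-> a = b.
Proof. unfold node_eqb. destruct (node_eq_dec a b); split; congruence. Qed.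
Lemma node_eqb_refl a : node_eqb a a = true. Proof. apply node_eqb_iff; auto. Qed.
Lemma nat_eqb_iff a b : Nat.eqb a b = true <-> a = b. Proof. apply Nat.eqb_eq. Qed.
Lemma pow_le1' (x : R) n : 0 <= x <= 1 -> x ^ n <= 1.
Proof. intros Hx; induction n; simpl; [lra|]. assert (0 <= x ^ n) by (apply pow_le; lra). nra. Qed.
Lemma pow_anti (x : R) a b : 0 <= x <= 1 -> (a <= b)%nat -> x ^ b <= x ^ a.
Proof. intros Hx Hab. replace b with (a + (b - a))%nat by lia. rewrite pow_add.
  assert (0 <= x ^ a) by (apply pow_le; lra). assert (x ^ (b - a) <= 1) by (apply pow_le1'; lra).
  assert (0 <= x ^ (b-a)) by (apply pow_le; lra). nra. Qed.

Lemma NoDup_flat_map_key {X Y} (g : X -> list Y) (key : Y -> X) l :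
  NoDup l -> (forall x, In x l -> NoDup (g x)) -> (forall x z, In x l -> In z (g x) -> key z = x) ->
  NoDup (flat_map g l).
Proof. induction l; intros Hnd Hg Hk; simpl; [constructor|]. inversion Hnd; subst.
  apply NoDup_app. apply Hg; simpl; auto. apply IHl; auto; intros; [apply Hg|apply Hk]; simpl; auto.
  intros z Hz Hz'. apply in_flat_map in Hz'. destruct Hz' as [x [Hx Hzx]].
  assert (key z = a) by (apply Hk; simpl; auto). assert (key z = x) by (apply Hk; simpl; auto). subst. congruence. Qed.

Section Main.
Variables (I : nat) (E : nat -> nat -> bool) (A : nat -> nat -> R) (m : R)
  (T D : nat) (ik : nat -> nat) (dk : nat -> nat -> nat).
Hypothesis HI : (1 <= I)%nat.
Hypothesis HEV : forall j i, E j i = true -> (j < I)%nat /\ (i < I)%nat.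
Hypothesis HEloop : forall i, E i i = false.
Hypothesis HEsc : forall i j, (i < I)%nat -> (j < I)%nat -> i <> j ->
           clos_trans nat (fun a b => E a b = true) i j.
Hypothesis Hm : 0 < m < 1.
Hypothesis HAcol : forall j, (j < I)%nat -> lsum (seq 0 I) (fun i => A i j) = 1.
Hypothesis HAdiag : forall i, (i < I)%nat -> A i i >= m.
Hypothesis HAedge : forall i j, E j i = true -> A i j >= m.
Hypothesis HAzero : forall i j, (i < I)%nat -> (j < I)%nat -> i <> j -> E j i = false -> A i j = 0.
Hypothesis Hik : forall k, (ik k < I)%nat.
Hypothesis HT : forall k i, (i < I)%nat -> exists s, (k <= s < k + T)%nat /\ ik s = i.
Hypothesis Hdk : forall k j, E j (ik k) = true -> (dk k j <= D)%nat.

Local Notation ns := (nodes I E D).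

Lemma in_Ag h : In (Ag h) ns <-> (h < I)%nat.
Proof. unfold nodes. rewrite in_app_iff, in_map_iff. split.
  - intros [[x [Hx Hin]]|H]. inversion Hx; subst. apply in_seq in Hin; lia.
    apply in_flat_map in H. destruct H as [j [_ H]]. apply in_flat_map in H. destruct H as [i [_ H]].
    destruct (E j i); [|destruct H]. apply in_map_iff in H. destruct H as [? [H _]]; discriminate.
  - intros. left. exists h; split; auto. apply in_seq; lia. Qed.

Lemma in_Buf j i d : In (Buf j i d) ns <-> E j i = true /\ (d <= D)%nat.
Proof. unfold nodes. rewrite in_app_iff, in_map_iff. split.
  - intros [[x [Hx Hin]]|H]. discriminate.
    apply in_flat_map in H. destruct H as [j' [_ H]]. apply in_flat_map in H. destruct H as [i' [_ H]].
    destruct (E j' i') eqn:Ee; [|destruct H]. apply in_map_iff in H. destruct H as [d' [H Hd]].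
    inversion H; subst. apply in_seq in Hd. split; auto; lia.
  - intros [He Hd]. right. destruct (HEV _ _ He). apply in_flat_map. exists j; split; [apply in_seq; lia|].
    apply in_flat_map. exists i; split; [apply in_seq; lia|]. rewrite He. apply in_map. apply in_seq; lia. Qed.

Lemma ns_NoDup : NoDup ns.
Proof. unfold nodes. apply NoDup_app.
  - apply Injective_map_NoDup. intros a b H; inversion H; auto. apply seq_NoDup.
  - apply NoDup_flat_map_key with (key := fun z => match z with Buf j _ _ => j | Ag h => h end).
    apply seq_NoDup.
    + intros j _. apply NoDup_flat_map_key with (key := fun z => match z with Buf _ i _ => i | Ag h => h end).
      apply seq_NoDup. intros i _. destruct (E j i); [|constructor].
      apply Injective_map_NoDup. intros a b H; inversion H; auto. apply seq_NoDup.
      intros i z _ Hz. destruct (E j i); [|destruct Hz]. apply in_map_iff in Hz. destruct Hz as [? [<- _]]; auto.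
    + intros j z _ Hz. apply in_flat_map in Hz. destruct Hz as [i [_ Hz]].
      destruct (E j i); [|destruct Hz]. apply in_map_iff in Hz. destruct Hz as [? [<- _]]; auto.
  - intros a Ha Hb. apply in_map_iff in Ha. destruct Ha as [h [<- _]].
    apply in_flat_map in Hb. destruct Hb as [j [_ H]]. apply in_flat_map in H. destruct H as [i [_ H]].
    destruct (E j i); [|destruct H]. apply in_map_iff in H. destruct H as [? [H _]]; discriminate. Qed.

Lemma lsum_ind (x : node) g : In x ns -> lsum ns (fun r => if node_eqb r x then g r else 0) = g x.
Proof. intros. apply lsum_ind_gen; auto. apply node_eqb_iff. apply ns_NoDup. Qed.

Lemma lsum_ind_nat (l : nat) n (x : nat) g : (x < n)%nat ->
  lsum (seq l n) (fun r => if Nat.eqb r (l + x) then g r else 0) = g (l + x)%nat.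
Proof. intros. apply lsum_ind_gen; auto. apply Nat.eqb_eq. apply seq_NoDup. apply in_seq; lia. Qed.

Lemma lsum_ns f : lsum ns f = lsum (seq 0 I) (fun h => f (Ag h)) +
  lsum (seq 0 I) (fun j => lsum (seq 0 I) (fun i => if E j i then lsum (seq 0 (S D)) (fun d => f (Buf j i d)) else 0)).
Proof. unfold nodes. rewrite lsum_app, lsum_map, lsum_flat_map. f_equal. apply lsum_ext_in; intros j _.
  rewrite lsum_flat_map. apply lsum_ext_in; intros i _. destruct (E j i); [apply lsum_map|reflexivity]. Qed.


Ltac nd := unfold node_eqb; repeat match goal with |- context [node_eq_dec ?a ?b] => destruct (node_eq_dec a b) end.
Ltac bs := repeat (match goal with
  | |- context [Nat.eqb ?a ?b] => destruct (Nat.eqb_spec a b)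
  | |- context [Nat.ltb ?a ?b] => destruct (Nat.ltb_spec a b)
  | |- context [E ?a ?b] => let e := fresh "Ee" in destruct (E a b) eqn:e
  end; cbn -[Nat.eqb Nat.ltb] in *).

Lemma S_nonneg k p q : 0 <= Smat A E D ik k p q.
Proof. destruct p as [h'|a b [|e]], q as [h|a' b' d']; simpl;
  repeat match goal with |- context [if ?b then _ else _] => destruct b eqn:? end; try lra.
  - apply Nat.eqb_eq in Heqb0; subst. apply Rge_le, Rge_trans with m; [apply HAdiag; auto| lra].
  - apply andb_true_iff in Heqb0; destruct Heqb0 as [H1 H2]. apply andb_true_iff in H1; destruct H1 as [H1 _].
    apply Nat.eqb_eq in H1; subst. apply Rge_le, Rge_trans with m; [apply HAedge; auto| lra]. Qed.

Lemma C_nonneg k p q : 0 <= Cmat E D ik dk k p q.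
Proof. unfold Cmat. destruct (inRk _ _ _ _ _ _); nd; lra. Qed.

Lemma Ahat_nonneg k p q : 0 <= Ahat A I E D ik dk k p q.
Proof. unfold Ahat, mmul. apply lsum_nonneg. intros. apply Rmult_le_pos; [apply S_nonneg|apply C_nonneg]. Qed.

Lemma Ahat_eq k p q : In q ns -> Ahat A I E D ik dk k p q =
  if inRk E D ik dk k q then Smat A E D ik k p (Ag (ik k)) else Smat A E D ik k p q.
Proof. intros Hq. unfold Ahat, mmul, Cmat. destruct (inRk _ _ _ _ _ _).
  - rewrite <- (lsum_ind (Ag (ik k)) (Smat A E D ik k p)) by (apply in_Ag; auto).
    apply lsum_ext_in; intros r _. destruct (node_eqb r _); lra.
  - rewrite <- (lsum_ind q (Smat A E D ik k p)) by auto.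
    apply lsum_ext_in; intros r _. destruct (node_eqb r _); lra. Qed.

Lemma S_col_Ag_other k p h : h <> ik k -> Smat A E D ik k p (Ag h) = if node_eqb p (Ag h) then 1 else 0.
Proof. intros Hh. destruct p as [h'|a b [|e]]; simpl; nd; bs; try congruence; try lra. Qed.

Lemma S_col_Buf k p j i d : (d <= D)%nat ->
  Smat A E D ik k p (Buf j i d) = if node_eqb p (Buf j i (if Nat.ltb d D then S d else d)) then 1 else 0.
Proof. intros Hd. destruct p as [h'|a b [|e]], d as [|d]; cbn -[Nat.eqb Nat.ltb]; bs; nd; try congruence; try lra;
  try (exfalso; lia); try (match goal with H: Buf _ _ _ = Buf _ _ _ |- _ => inversion H; subst end; try lia; congruence).
  Qed.

Lemma S_colsum_ik k : lsum ns (fun p => Smat A E D ik k p (Ag (ik k))) = 1.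
Proof. remember (ik k) as h eqn:Hh0. assert (Hh : (h < I)%nat) by (subst; apply Hik). rewrite lsum_ns.
  rewrite (lsum_ext_in _ (fun h' => Smat A E D ik k (Ag h') (Ag h)) (fun h' => if Nat.eqb h' (0 + h) then A h h else 0)).
  2:{ intros h' _. simpl. destruct (Nat.eqb_spec h' h); [subst; rewrite Nat.eqb_refl; reflexivity|reflexivity]. }
  rewrite lsum_ind_nat by lia.
  rewrite (lsum_ext_in _ _ (fun j => if Nat.eqb j (0 + h) then lsum (seq 0 I) (fun i => if E h i then A i h else 0) else 0)).
  2:{ intros j _. destruct (Nat.eqb_spec j (0 + h)).
      - simpl in e; subst j. apply lsum_ext_in; intros i _. destruct (E h i) eqn:Ee; auto.
        change (seq 0 (S D)) with (0%nat :: seq 1 D). rewrite lsum_cons. rewrite lsum_zero.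
        + cbn -[Nat.eqb]. rewrite <- Hh0, Nat.eqb_refl, Ee. simpl. lra.
        + intros d Hd. apply in_seq in Hd. destruct d; [lia|]. reflexivity.
      - apply lsum_zero. intros i _. destruct (E j i) eqn:Ee; auto. apply lsum_zero. intros d _.
        destruct d; simpl; auto. simpl in n. destruct (Nat.eqb_spec j (ik k)); [subst h; lia|reflexivity]. }
  rewrite lsum_ind_nat by lia. simpl.
  rewrite <- (HAcol h Hh). rewrite <- (lsum_ind_nat 0 I h (fun _ => A h h)) by lia. rewrite <- lsum_plus.
  apply lsum_ext_in. intros i Hi. apply in_seq in Hi. simpl.
  destruct (Nat.eqb_spec i h).
  - subst. rewrite HEloop. lra.
  - destruct (E h i) eqn:Ee. lra. rewrite HAzero by (auto; lia). lra. Qed.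

Lemma S_colsum k q : In q ns -> lsum ns (fun p => Smat A E D ik k p q) = 1.
Proof. intros Hq. destruct q as [h|j i d].
  - destruct (Nat.eq_dec h (ik k)). subst; apply S_colsum_ik.
    rewrite (lsum_ext_in _ _ (fun p => if node_eqb p (Ag h) then 1 else 0)) by (intros; apply S_col_Ag_other; auto).
    apply (lsum_ind (Ag h) (fun _ => 1)); auto.
  - apply in_Buf in Hq. destruct Hq as [He Hd].
    rewrite (lsum_ext_in _ _ (fun p => if node_eqb p (Buf j i (if Nat.ltb d D then S d else d)) then 1 else 0))
      by (intros; apply S_col_Buf; auto).
    apply (lsum_ind _ (fun _ => 1)). apply in_Buf. split; auto. destruct (Nat.ltb_spec d D); lia. Qed.

Lemma Ahat_colsum k q : In q ns -> lsum ns (fun p => Ahat A I E D ik dk k p q) = 1.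
Proof. intros Hq. rewrite (lsum_ext_in _ _ (fun p => if inRk E D ik dk k q then Smat A E D ik k p (Ag (ik k)) else Smat A E D ik k p q))
  by (intros; apply Ahat_eq; auto). destruct (inRk _ _ _ _ _ _). apply S_colsum_ik. apply S_colsum; auto. Qed.

Lemma node_eqb_sym a b : node_eqb a b = node_eqb b a.
Proof. nd; congruence. Qed.

Definition Id : node -> node -> R := fun p q => if node_eqb p q then 1 else 0.

Fixpoint Prod (t n : nat) : node -> node -> R :=
  match n with
  | O => Id
  | S n' => mmul ns (Ahat A I E D ik dk (t + n')) (Prod t n')
  end.

Lemma Prod_nonneg t n p q : 0 <= Prod t n p q.
Proof. revert p q; induction n; intros; simpl. unfold Id; destruct (node_eqb p q); lra.
  unfold mmul. apply lsum_nonneg; intros. apply Rmult_le_pos; auto. apply Ahat_nonneg. Qed.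

Lemma Prod_colsum t n q : In q ns -> lsum ns (fun p => Prod t n p q) = 1.
Proof. intros Hq. induction n; simpl.
  - unfold Id. apply (lsum_ind q (fun _ => 1)); auto.
  - unfold mmul. rewrite lsum_swap. rewrite <- IHn. apply lsum_ext_in. intros r Hr.
    rewrite lsum_scalr, Ahat_colsum by auto. lra. Qed.

Lemma mmul_assoc M N P p q : mmul ns (mmul ns M N) P p q = mmul ns M (mmul ns N P) p q.
Proof. unfold mmul. rewrite (lsum_ext_in _ _ (fun r => lsum ns (fun s => M p s * N s r * P r q)))
  by (intros; rewrite <- lsum_scalr; reflexivity).
  rewrite lsum_swap. apply lsum_ext_in; intros s _. rewrite <- lsum_scal. apply lsum_ext_in; intros; lra. Qed.

Lemma mmul_id_l X p q : In p ns -> mmul ns Id X p q = X p q.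
Proof. intros Hp. unfold mmul, Id. rewrite <- (lsum_ind p (fun r => X r q)) by auto.
  apply lsum_ext_in; intros r _. rewrite node_eqb_sym. destruct (node_eqb r p); lra. Qed.

Lemma mmul_id_r X p q : In q ns -> mmul ns X Id p q = X p q.
Proof. intros Hq. unfold mmul, Id. rewrite <- (lsum_ind q (fun r => X p r)) by auto.
  apply lsum_ext_in; intros r _. destruct (node_eqb r q); lra. Qed.

Lemma Prod_split t a b p q : In p ns -> Prod t (a + b) p q = mmul ns (Prod (t + a) b) (Prod t a) p q.
Proof. revert p q; induction b; intros p q Hp.
  - rewrite Nat.add_0_r. simpl. rewrite mmul_id_l; auto.
  - replace (a + S b)%nat with (S (a + b)) by lia. simpl.
    transitivity (mmul ns (Ahat A I E D ik dk (t + (a + b))) (mmul ns (Prod (t + a) b) (Prod t a)) p q).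
    { unfold mmul at 1 3. apply lsum_ext_in; intros r Hr. rewrite IHb; auto. }
    rewrite <- mmul_assoc. rewrite Nat.add_assoc. reflexivity. Qed.

Lemma AprodN_Prod t n p q : In q ns -> AprodN A I E D ik dk t n p q = Prod t (S n) p q.
Proof. intros Hq. revert p; induction n; intros p.
  - simpl. rewrite mmul_id_r, Nat.add_0_r; auto.
  - simpl. unfold mmul at 1 2. apply lsum_ext_in; intros r Hr. rewrite IHn. reflexivity. Qed.

Lemma Prod_le1 t n p q : In p ns -> In q ns -> Prod t n p q <= 1.
Proof. intros. rewrite <- (Prod_colsum t n q) by auto. apply (lsum_term ns (fun p => Prod t n p q)); auto.
  intros; apply Prod_nonneg. Qed.

Definition Rch u n x y := m ^ n <= Prod u n y x.

Lemma Rch_refl u x : Rch u 0 x x.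
Proof. unfold Rch; simpl. unfold Id. rewrite node_eqb_refl. lra. Qed.

Lemma Rch_step u n x y z : In y ns -> Rch u n x y -> m <= Ahat A I E D ik dk (u + n) z y -> Rch u (S n) x z.
Proof. unfold Rch; intros Hy H1 H2. simpl. unfold mmul.
  eapply Rle_trans; [|apply (lsum_term ns (fun r => Ahat A I E D ik dk (u + n) z r * Prod u n r x) y Hy)].
  - assert (0 <= m ^ n) by (apply pow_le; lra). nra.
  - intros; apply Rmult_le_pos; [apply Ahat_nonneg|apply Prod_nonneg]. Qed.

Lemma Ahat_stay w h : (h < I)%nat -> m <= Ahat A I E D ik dk w (Ag h) (Ag h).
Proof. intros Hh. rewrite Ahat_eq by (apply in_Ag; auto). simpl. rewrite Nat.eqb_refl.
  destruct (Nat.eqb_spec h (ik w)). subst. apply Rge_le, HAdiag; auto. lra. Qed.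

Lemma Ahat_send w j i : E j i = true -> ik w = j -> m <= Ahat A I E D ik dk w (Buf j i 0) (Ag j).
Proof. intros He Hw. rewrite Ahat_eq by (apply in_Ag; apply HEV in He; tauto). simpl. subst.
  rewrite Nat.eqb_refl, He. simpl. apply Rge_le, HAedge; auto. Qed.

Lemma Ahat_buf_in w j i d : E j i = true -> (d <= D)%nat -> inRk E D ik dk w (Buf j i d) = true ->
  m <= Ahat A I E D ik dk w (Ag i) (Buf j i d).
Proof. intros He Hd Hin. rewrite Ahat_eq by (apply in_Buf; auto). rewrite Hin.
  simpl in Hin. apply andb_true_iff in Hin as [Hin _]. apply andb_true_iff in Hin as [Hin _].
  apply andb_true_iff in Hin as [Hin _]. apply Nat.eqb_eq in Hin. subst. simpl. rewrite !Nat.eqb_refl.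
  apply Rge_le, HAdiag; auto. Qed.

Lemma Ahat_buf_out w j i d : E j i = true -> (d <= D)%nat -> inRk E D ik dk w (Buf j i d) = false ->
  m <= Ahat A I E D ik dk w (Buf j i (if Nat.ltb d D then S d else d)) (Buf j i d).
Proof. intros He Hd Hin. rewrite Ahat_eq by (apply in_Buf; auto). rewrite Hin.
  rewrite S_col_Buf, node_eqb_refl by auto. lra. Qed.

Lemma inRk_D w j i : E j i = true -> ik w = i -> inRk E D ik dk w (Buf j i D) = true.
Proof. intros He Hw. subst i. assert (Hd : (dk w j <= D)%nat) by (apply Hdk; auto).
  unfold inRk, tau. simpl. rewrite Nat.eqb_refl, He, Nat.leb_refl. simpl. rewrite andb_true_r. apply Z.leb_le.
  pose proof (Z.le_max_r (tauS E D ik dk w (ik w) j) (Z.of_nat w - Z.of_nat (dk w j))). lia. Qed.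

Lemma stay u n x h k : (h < I)%nat -> Rch u n x (Ag h) -> Rch u (n + k) x (Ag h).
Proof. intros Hh H. induction k. rewrite Nat.add_0_r; auto.
  rewrite Nat.add_succ_r. eapply Rch_step; eauto. apply in_Ag; auto. apply Ahat_stay; auto. Qed.

Lemma stay_le u n n' x h : (h < I)%nat -> (n <= n')%nat -> Rch u n x (Ag h) -> Rch u n' x (Ag h).
Proof. intros. replace n' with (n + (n' - n))%nat by lia. apply stay; auto. Qed.

Lemma waitD j i s : E j i = true -> ik s = i -> forall g u n x, s = (u + n + g)%nat ->
  Rch u n x (Buf j i D) -> Rch u (S (s - u)) x (Ag i).
Proof. intros He Hs. assert (Hi : (i < I)%nat) by (apply HEV in He; tauto).
  assert (HB : In (Buf j i D) ns) by (apply in_Buf; auto).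
  induction g; intros u n x Hsg H.
  - replace (S (s - u)) with (S n) by lia. eapply Rch_step; eauto. apply Ahat_buf_in; auto.
    apply inRk_D; auto. rewrite <- Hs. f_equal. lia.
  - destruct (inRk E D ik dk (u + n) (Buf j i D)) eqn:Hin.
    + apply stay_le with (S n); auto. lia. eapply Rch_step; eauto. apply Ahat_buf_in; auto.
    + apply (IHg u (S n)). lia. eapply Rch_step; eauto.
      pose proof (Ahat_buf_out (u + n) j i D He (le_n _) Hin) as Hb. rewrite Nat.ltb_irrefl in Hb. exact Hb. Qed.

Lemma flushD u n x j i : E j i = true -> Rch u n x (Buf j i D) -> Rch u (n + T) x (Ag i).
Proof. intros He H. assert (Hi : (i < I)%nat) by (apply HEV in He; tauto).
  destruct (HT (u + n) i Hi) as [s [Hs1 Hs2]].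
  apply stay_le with (S (s - u)); auto. lia. eapply (waitD j i s He Hs2 (s - u - n)); eauto. lia. Qed.

Lemma flush j i : E j i = true -> forall e d u n x, (D - d = e)%nat -> (d <= D)%nat ->
  Rch u n x (Buf j i d) -> Rch u (n + e + T) x (Ag i).
Proof. intros He. assert (Hi : (i < I)%nat) by (apply HEV in He; tauto).
  induction e; intros d u n x He' Hd H.
  - replace d with D in H by lia. rewrite Nat.add_0_r. apply flushD with j; auto.
  - destruct (inRk E D ik dk (u + n) (Buf j i d)) eqn:Hin.
    + apply stay_le with (S n); auto. lia. eapply Rch_step; eauto. apply in_Buf; auto. apply Ahat_buf_in; auto.
    + replace (n + S e)%nat with (S n + e)%nat by lia. apply (IHe (S d)). lia. lia.
      eapply Rch_step; eauto. apply in_Buf; auto.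
      pose proof (Ahat_buf_out (u + n) j i d He Hd Hin) as Hb.
      destruct (Nat.ltb_spec d D); [exact Hb|lia]. Qed.

Lemma hop u n x j i : E j i = true -> Rch u n x (Ag j) -> Rch u (n + (2 * T + D)) x (Ag i).
Proof. intros He H. destruct (HEV _ _ He) as [Hj Hi].
  destruct (HT (u + n) j Hj) as [s [Hs1 Hs2]].
  assert (H1 : Rch u (s - u) x (Ag j)) by (apply stay_le with n; auto; lia).
  assert (H2 : Rch u (S (s - u)) x (Buf j i 0)).
  { eapply Rch_step; eauto. apply in_Ag; auto. apply Ahat_send; auto. rewrite <- Hs2. f_equal. lia. }
  apply stay_le with (S (s - u) + D + T)%nat; auto. lia.
  apply (flush j i He D 0); auto; lia. Qed.

Definition hopsF l h i := exists f : nat -> nat, f 0%nat = h /\ f l = i /\ forall k, (k < l)%nat -> E (f k) (f (S k)) = true.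

Lemma path_rch l : forall f u n x, (forall k, (k < l)%nat -> E (f k) (f (S k)) = true) ->
  Rch u n x (Ag (f 0%nat)) -> Rch u (n + l * (2 * T + D)) x (Ag (f l)).
Proof. induction l; intros f u n x Hf H. simpl; rewrite Nat.add_0_r; auto.
  replace (n + S l * (2 * T + D))%nat with (n + l * (2 * T + D) + (2 * T + D))%nat by lia.
  apply hop with (f l); auto. Qed.

Lemma pigeon n : forall f : nat -> nat, (forall k, (k <= n)%nat -> (f k < n)%nat) ->
  exists a b, (a < b <= n)%nat /\ f a = f b.
Proof. induction n; intros f Hf. specialize (Hf 0%nat (le_n _)); lia.
  destruct (classic (exists k, (k <= n)%nat /\ f k = f (S n))) as [[k [Hk1 Hk2]]|Hno].
  - exists k, (S n); split; auto; lia.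
  - destruct (IHn (fun k => if Nat.eqb (f k) n then f (S n) else f k)) as [a [b [Hab Heq]]].
    + intros k Hk. destruct (Nat.eqb_spec (f k) n).
      * assert (f (S n) <> n) by (intros E'; apply Hno; exists k; split; auto; lia).
        specialize (Hf (S n) (le_n _)); lia.
      * specialize (Hf k ltac:(lia)); lia.
    + exists a, b. split; [lia|]. destruct (Nat.eqb_spec (f a) n), (Nat.eqb_spec (f b) n); try congruence.
      * exfalso; apply Hno; exists b; split; [lia|congruence].
      * exfalso; apply Hno; exists a; split; [lia|congruence]. Qed.

Lemma ct_hops h i : clos_trans nat (fun a b => E a b = true) h i -> exists l, hopsF l h i.
Proof. induction 1.
  - exists 1%nat, (fun k => if Nat.eqb k 0 then x else y). repeat split; auto. intros k Hk.
    replace k with 0%nat by lia. simpl. auto.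
  - destruct IHclos_trans1 as [l1 [f1 [A1 [B1 C1]]]]. destruct IHclos_trans2 as [l2 [f2 [A2 [B2 C2]]]].
    exists (l1 + l2)%nat, (fun k => if Nat.leb k l1 then f1 k else f2 (k - l1)%nat). repeat split.
    + simpl. auto.
    + destruct (Nat.leb_spec (l1 + l2) l1). replace l2 with 0%nat in * by lia. rewrite Nat.add_0_r. congruence.
      rewrite <- B2. f_equal. lia.
    + intros k Hk. destruct (Nat.leb_spec k l1), (Nat.leb_spec (S k) l1).
      * apply C1; lia.
      * assert (k = l1) by lia. subst k. replace (S l1 - l1)%nat with 1%nat by lia. rewrite B1, <- A2. apply C2. lia.
      * lia.
      * replace (S k - l1)%nat with (S (k - l1)) by lia. apply C2; lia. Qed.

Lemma shorten l : forall h i, hopsF l h i -> (h < I)%nat -> exists l', (l' <= I - 1)%nat /\ hopsF l' h i.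
Proof. induction l as [l IH] using (well_founded_induction lt_wf). intros h i [f [Hf0 [Hfl Hf]]] Hh.
  destruct (le_lt_dec l (I - 1)) as [Hl|Hl]. exists l; split; auto. exists f; auto.
  destruct (pigeon I f) as [a [b [Hab Hfab]]].
  { intros k Hk. destruct k. congruence. apply (HEV (f k)). apply Hf. lia. }
  apply (IH (l - (b - a))%nat ltac:(lia) h i); auto.
  exists (fun k => if Nat.leb k a then f k else f (k + (b - a))%nat). repeat split.
  - simpl. auto.
  - destruct (Nat.leb_spec (l - (b - a)) a). assert (l = b) by lia. subst b. assert (l - (l - a) = a)%nat by lia.
    rewrite H0. congruence. rewrite <- Hfl. f_equal. lia.
  - intros k Hk. destruct (Nat.leb_spec k a), (Nat.leb_spec (S k) a).
    + apply Hf; lia.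
    + assert (k = a) by lia. subst k. rewrite Hfab. replace (S a + (b - a))%nat with (S b) by lia. apply Hf. lia.
    + lia.
    + replace (S k + (b - a))%nat with (S (k + (b - a))) by lia. apply Hf. lia. Qed.

Lemma reach_all u x i : In x ns -> (i < I)%nat -> Rch u (K1 I T D) x (Ag i).
Proof. intros Hx Hi.
  assert (H0 : exists h, (h < I)%nat /\ Rch u (D + T) x (Ag h)).
  { destruct x as [h|j i' d].
    - apply in_Ag in Hx. exists h; split; auto. apply stay_le with 0%nat; auto. lia. apply Rch_refl.
    - apply in_Buf in Hx as [He Hd]. exists i'. split. apply HEV in He; tauto.
      apply stay_le with (0 + (D - d) + T)%nat. apply HEV in He; tauto. lia.
      apply (flush j i' He (D - d) d); auto. apply Rch_refl. }
  destruct H0 as [h [Hh H0]].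
  assert (Hp : exists l, (l <= I - 1)%nat /\ hopsF l h i).
  { destruct (Nat.eq_dec h i). subst. exists 0%nat; split. lia. exists (fun _ => i). repeat split; intros; lia.
    destruct (ct_hops h i (HEsc h i Hh Hi n)) as [l Hl]. apply (shorten l); auto. }
  destruct Hp as [l [Hl [f [Hf0 [Hfl Hf]]]]]. subst h i.
  apply stay_le with (D + T + l * (2 * T + D))%nat; auto.
  - unfold K1. assert (l * (2 * T + D) <= (I - 1) * (2 * T + D))%nat by (apply Nat.mul_le_mono_r; auto).
    destruct I as [|I']. lia. replace (S I' - 1)%nat with I' in H by lia.
    replace (2 * S I' - 1)%nat with (S (2 * I')) by lia. nia.
  - apply path_rch; auto. Qed.

Definition norm1 (z : node -> R) := lsum ns (fun p => Rabs (z p)).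

Lemma contr (W : node -> node -> R) z eta p0 : (forall p q, 0 <= W p q) ->
  (forall q, In q ns -> lsum ns (fun p => W p q) = 1) -> In p0 ns -> (forall r, In r ns -> eta <= W p0 r) ->
  lsum ns z = 0 -> norm1 (fun p => lsum ns (fun r => W p r * z r)) <= (1 - eta) * norm1 z.
Proof. intros Hnn Hcs Hp0 Hrow Hz. unfold norm1.
  set (W' := fun p r => W p r - eta * Id p p0).
  assert (HW' : forall p r, In r ns -> 0 <= W' p r).
  { intros p r Hr. unfold W', Id. destruct (node_eq_dec p p0) as [->|]; [rewrite node_eqb_refl; specialize (Hrow r Hr); lra|].
    replace (node_eqb p p0) with false. specialize (Hnn p r); lra. symmetry. destruct (node_eqb p p0) eqn:Ee; auto. apply node_eqb_iff in Ee. contradiction. }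
  apply Rle_trans with (lsum ns (fun p => lsum ns (fun r => W' p r * Rabs (z r)))).
  - apply lsum_le; intros p _.
    replace (lsum ns (fun r => W p r * z r)) with (lsum ns (fun r => W' p r * z r)).
    + eapply Rle_trans; [apply lsum_abs|]. apply lsum_le; intros r Hr. rewrite Rabs_mult, (Rabs_right (W' p r)). lra.
      apply Rle_ge, HW'; auto.
    + unfold W'. rewrite (lsum_ext_in _ _ (fun r => W p r * z r - (eta * Id p p0) * z r)) by (intros; ring).
      rewrite lsum_minus, lsum_scal, Hz. ring.
  - rewrite lsum_swap. rewrite <- lsum_scal. apply Req_le. apply lsum_ext_in; intros r Hr.
    rewrite lsum_scalr. f_equal. unfold W'. rewrite lsum_minus, lsum_scal, Hcs by auto. unfold Id.
    rewrite (lsum_ind p0 (fun _ => 1)) by auto. ring. Qed.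

Lemma Fbound t a b : In a ns -> In b ns -> forall q n, (q * K1 I T D <= n)%nat ->
  norm1 (fun p => Prod t n p a - Prod t n p b) <= 2 * (1 - m ^ K1 I T D) ^ q.
Proof. intros Ha Hb q. set (K := K1 I T D).
  assert (HmK : m ^ K <= 1) by (apply pow_le1'; lra).
  induction q; intros n Hn.
  - simpl. unfold norm1. apply Rle_trans with (lsum ns (fun p => Prod t n p a + Prod t n p b)).
    + apply lsum_le; intros p _. pose proof (Prod_nonneg t n p a). pose proof (Prod_nonneg t n p b).
      unfold Rabs; destruct (Rcase_abs _); lra.
    + rewrite lsum_plus, !Prod_colsum by auto. lra.
  - assert (Hn' : n = ((n - K) + K)%nat) by (simpl in Hn; lia).
    unfold norm1. rewrite (lsum_ext_in _ _ (fun p => Rabs (lsum ns (fun r => Prod (t + (n - K)) K p r *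
        (Prod t (n - K) r a - Prod t (n - K) r b))))).
    2:{ intros p Hp. f_equal. rewrite Hn'. rewrite !Prod_split by auto. unfold mmul. rewrite <- lsum_minus.
        replace (n - K + K - K)%nat with (n - K)%nat by lia. apply lsum_ext_in; intros; ring. }
    eapply Rle_trans. apply (contr _ _ (m ^ K) (Ag 0)).
    + intros; apply Prod_nonneg.
    + intros; apply Prod_colsum; auto.
    + apply in_Ag; lia.
    + intros r Hr. apply reach_all; auto; lia.
    + rewrite lsum_minus, !Prod_colsum by auto. ring.
    + simpl. specialize (IHq (n - K)%nat ltac:(simpl in Hn; lia)).
      replace (2 * ((1 - m^K) * (1 - m^K)^q)) with ((1 - m^K) * (2 * (1 - m^K)^q)) by ring.
      apply Rmult_le_compat_l; [lra|exact IHq]. Qed.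

Lemma main :
  let K := K1 I T D in
  let eta := m ^ K in
  let C := 2 * (1 + / m ^ K) / (1 - m ^ K) in
  let rho := Rpower (1 - m ^ K) (/ INR K) in
  0 < rho < 1 /\
  exists xi : nat -> node -> R,
    (forall k, (forall p, In p (nodes I E D) -> 0 <= xi k p) /\
               lsum (nodes I E D) (xi k) = 1) /\
    (forall k t p q, (t <= k)%nat -> In p (nodes I E D) -> In q (nodes I E D) ->
       Rabs (Aprod A I E D ik dk k t p q - xi k p) <= C * rho ^ (k - t)) /\
    (forall k i, (i < I)%nat -> xi k (Ag i) >= eta).
Proof. intros K eta C rho.
  assert (HT1 : (1 <= T)%nat) by (destruct (HT 0 0) as [s Hs]; lia).
  assert (HK : (1 <= K)%nat) by (unfold K, K1; nia).
  assert (Heta : 0 < eta < 1).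
  { unfold eta. split. apply pow_lt; lra. apply Rle_lt_trans with (m ^ 1). apply pow_anti; [lra|lia]. simpl; lra. }
  assert (HKpos : 0 < INR K) by (apply lt_0_INR; lia).
  assert (Hrho0 : 0 < rho) by (unfold rho, Rpower; apply exp_pos).
  assert (HrhoK : rho ^ K = 1 - eta).
  { unfold rho. rewrite <- Rpower_pow by (unfold Rpower; apply exp_pos). rewrite Rpower_mult.
    rewrite Rinv_l by lra. apply Rpower_1. unfold eta, K in *. lra. }
  assert (Hrho1 : rho < 1).
  { unfold rho, Rpower. apply Rlt_le_trans with (exp 0); [apply exp_increasing|rewrite exp_0; lra].
    assert (ln (1 - m ^ K) < 0). { rewrite <- ln_1. apply ln_increasing; unfold eta, K in *; lra. }
    assert (0 < / INR K) by (apply Rinv_0_lt_compat; lra). nra. }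
  assert (Hreal : forall j q, (j < S q * K)%nat -> 2 * (1 - eta) ^ q <= C * rho ^ j).
  { intros j q Hj. assert (rho ^ (K * S q) <= rho ^ j) by (apply pow_anti; [lra|lia]).
    rewrite pow_mult, HrhoK in H. simpl in H.
    assert (HC : C * (1 - eta) = 2 * (1 + / eta)) by (unfold C, eta in *; field; lra).
    assert (0 <= (1 - eta) ^ q) by (apply pow_le; lra).
    assert (0 < / eta) by (apply Rinv_0_lt_compat; lra).
    assert (0 <= C) by (unfold C; fold eta; apply Rmult_le_pos; [|apply Rlt_le, Rinv_0_lt_compat]; lra).
    apply Rle_trans with (C * ((1 - eta) * (1 - eta) ^ q)); [|apply Rmult_le_compat_l; auto].
    rewrite <- Rmult_assoc, HC. nra. }
  assert (HA0 : In (Ag 0) ns) by (apply in_Ag; lia).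
  split; [lra|].
  exists (fun k p => Prod 0 (S (Nat.max k (K - 1))) p (Ag 0)). split; [|split].
  - intros k. split. intros; apply Prod_nonneg. apply Prod_colsum; auto.
  - intros k t p q Htk Hp Hq. unfold Aprod. rewrite AprodN_Prod by auto.
    destruct (le_lt_dec (K - 1) k) as [Hk|Hk].
    + rewrite Nat.max_l by lia.
      set (n := S (k - t)).
      replace (S k) with (t + n)%nat by (unfold n; lia). rewrite Prod_split by auto.
      set (qn := (n / K)%nat).
      assert (Hq1 : (qn * K <= n)%nat) by (unfold qn; rewrite Nat.mul_comm; apply Nat.Div0.mul_div_le).
      assert (Hq2 : (k - t < S qn * K)%nat) by (unfold qn; pose proof (Nat.mul_succ_div_gt n K ltac:(lia)); unfold n in *; lia).
      eapply Rle_trans; [|apply (Hreal _ qn Hq2)].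
      replace (Prod t n p q) with (lsum ns (fun r => Prod t n p q * Prod 0 t r (Ag 0)))
        by (rewrite lsum_scal, Prod_colsum by auto; ring).
      unfold mmul. rewrite Nat.add_0_l. rewrite <- lsum_minus. eapply Rle_trans; [apply lsum_abs|].
      apply Rle_trans with (lsum ns (fun r => 2 * (1 - eta) ^ qn * Prod 0 t r (Ag 0))).
      * apply lsum_le; intros r Hr. rewrite <- Rmult_minus_distr_r, Rabs_mult, (Rabs_right (Prod 0 t r (Ag 0)))
          by (apply Rle_ge, Prod_nonneg). apply Rmult_le_compat_r. apply Prod_nonneg.
        eapply Rle_trans; [|apply (Fbound t q r Hq Hr qn n Hq1)].
        apply (lsum_term ns (fun p => Rabs (Prod t n p q - Prod t n p r))); auto. intros; apply Rabs_pos.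
      * rewrite lsum_scal, Prod_colsum by auto. lra.
    + eapply Rle_trans; [|apply (Hreal _ 0%nat); lia]. rewrite pow_O.
      pose proof (Prod_le1 t (S (k - t)) p q Hp Hq). pose proof (Prod_nonneg t (S (k - t)) p q).
      pose proof (Prod_le1 0 (S (Nat.max k (K - 1))) p (Ag 0) Hp HA0).
      pose proof (Prod_nonneg 0 (S (Nat.max k (K - 1))) p (Ag 0)).
      unfold Rabs; destruct (Rcase_abs _); lra.
  - intros k i Hi. set (k' := Nat.max k (K - 1)).
    replace (S k') with ((S k' - K) + K)%nat by (unfold k'; lia).
    rewrite Prod_split by (apply in_Ag; auto). unfold mmul. apply Rle_ge.
    apply Rle_trans with (lsum ns (fun r => eta * Prod 0 (S k' - K) r (Ag 0))).
    + rewrite lsum_scal, Prod_colsum by auto. lra.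
    + apply lsum_le; intros r Hr. apply Rmult_le_compat_r. apply Prod_nonneg.
      apply (reach_all (0 + (S k' - K)) r i Hr Hi). Qed.

End Main.

Theorem lemma4
  (I : nat) (E : nat -> nat -> bool) (A : nat -> nat -> R) (m : R)
  (T D : nat) (ik : nat -> nat) (dk : nat -> nat -> nat)
  (* V = {0,...,I-1} is nonempty *)
  (HI : (1 <= I)%nat)
  (* edges join agents; no self-loops; strong connectivity *)
  (HEV : forall j i, E j i = true -> (j < I)%nat /\ (i < I)%nat)
  (HEloop : forall i, E i i = false)
  (HEsc : forall i j, (i < I)%nat -> (j < I)%nat -> i <> j ->
           clos_trans nat (fun a b => E a b = true) i j)
  (* mbar in (0,1) *)
  (Hm : 0 < m < 1)
  (* A column stochastic with the prescribed sparsity / lower bounds *)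
  (HAcol : forall j, (j < I)%nat -> lsum (seq 0 I) (fun i => A i j) = 1)
  (HAdiag : forall i, (i < I)%nat -> A i i >= m)
  (HAedge : forall i j, E j i = true -> A i j >= m)
  (HAzero : forall i j, (i < I)%nat -> (j < I)%nat -> i <> j -> E j i = false ->
              A i j = 0)
  (* asynchrony model *)
  (Hik : forall k, (ik k < I)%nat)
  (HT : forall k i, (i < I)%nat -> exists s, (k <= s < k + T)%nat /\ ik s = i)
  (Hdk : forall k j, E j (ik k) = true -> (dk k j <= D)%nat) :
  let K := K1 I T D in
  let eta := m ^ K in
  let C := 2 * (1 + / m ^ K) / (1 - m ^ K) in
  let rho := Rpower (1 - m ^ K) (/ INR K) in
  0 < rho < 1 /\
  exists xi : nat -> node -> R,
    (forall k, (forall p, In p (nodes I E D) -> 0 <= xi k p) /\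
               lsum (nodes I E D) (xi k) = 1) /\
    (forall k t p q, (t <= k)%nat -> In p (nodes I E D) -> In q (nodes I E D) ->
       Rabs (Aprod A I E D ik dk k t p q - xi k p) <= C * rho ^ (k - t)) /\
    (forall k i, (i < I)%nat -> xi k (Ag i) >= eta).
Proof. eapply main; eauto. Qed.
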